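(* For every integer $d\ge 2$, $\lambda(d,2^{d-2})\ge 1-\dfrac{1}{3^{d-1}}$.
   Context: A $d$-subcube of $\{0,1\}^n$ is a set $C\subseteq\{0,1\}^n$ obtained by fixing $n-d$ coordinates to constant values and letting the remaining $d$ coordinates vary arbitrarily; there are $\binom nd 2^{n-d}$ of them. For integers $0\le s\le 2^d$ and $S\subseteq\{0,1\}^n$, let $\Lambda(S,d,s)$ be the number of $d$-subcubes $C$ with $|S\cap C|=s$, let $\Lambda(n,d,s)=\max\{\Lambda(S,d,s): S\subseteq\{0,1\}^n\}$ for $n\ge d$, and let $\lambda(d,s)=\lim_{n\to\infty}\Lambda(n,d,s)/\big(\binom nd 2^{n-d}\big)$ (the limit exists since the ratio is non-increasing in $n$). *)

(* Defs.v *)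
From HB Require Import structures.
From mathcomp Require Import all_boot all_order all_algebra.
From mathcomp Require Import all_classical all_reals all_analysis.
Set Implicit Arguments. Unset Strict Implicit. Unset Printing Implicit Defensive.
Import Order.TTheory GRing.Theory Num.Theory.
Import numFieldNormedType.Exports.
Local Open Scope ring_scope.

Definition point (n : nat) := {ffun 'I_n -> bool}.

(* A subcube of {0,1}^n is encoded by c : 'I_n -> option bool:
   c i = Some b means coordinate i is fixed to b, c i = None means it is free.
   This is a bijective encoding of subcubes. *)
Definition cube_code (n : nat) := {ffun 'I_n -> option bool}.

Definition cube_dim n (c : cube_code n) : nat := #|[set i | c i == None]|%N.

Definition in_cube n (c : cube_code n) (x : point n) : bool :=
  [forall i, if c i is Some b then x i == b else true].

Definition LambdaS n (S : {set point n}) (d s : nat) : nat :=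
  #|[set c : cube_code n | (cube_dim c == d) &&
        (#|[set x in S | in_cube c x]| == s)]|.

Definition Lambda (n d s : nat) : nat :=
  \max_(S : {set point n}) LambdaS S d s.

(* the ratio Lambda(n,d,s) / (binom(n,d) 2^(n-d)) (meaningful for n >= d) *)
Definition cube_ratio (R : realType) (d s n : nat) : R :=
  (Lambda n d s)%:R / ('C(n, d) * 2 ^ (n - d))%N%:R.

Definition cube_lambda (R : realType) (d s : nat) : R := limn (cube_ratio R d s).

(* Main.v *)
From Pilot Require Import Defs.
From HB Require Import structures.
From mathcomp Require Import all_boot all_order all_algebra.
From mathcomp Require Import all_classical all_reals all_analysis.
From mathcomp Require Import zify.
Import Pilot.Defs.
Local Notation subsetP := fintype.subsetP.
Local Notation setCK := finset.setCK.
Import Order.TTheory GRing.Theory Num.Theory.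
Import numFieldNormedType.Exports.
Set Implicit Arguments. Unset Strict Implicit. Unset Printing Implicit Defensive.

Definition freec n (c : cube_code n) : {set 'I_n} := [set i | c i == None].

Lemma cube_dimE n (c : cube_code n) : cube_dim c = #|freec c|.
Proof. by []. Qed.

Lemma card_cube_pts n (c : cube_code n) :
  #|[set x : point n | in_cube c x]| = 2 ^ cube_dim c.
Proof.
pose pt (X : {set 'I_n}) : point n :=
  [ffun i => if c i is Some b then b else i \in X].
have -> : [set x | in_cube c x] = pt @: powerset (freec c).
  apply/setP => x; rewrite inE; apply/idP/imsetP.
  - move=> hx; exists [set i in freec c | x i].
      by rewrite powersetE; apply/subsetP => i; rewrite inE => /andP[].
    apply/ffunP => i; rewrite ffunE; move/forallP: hx => /(_ i).
    case E: (c i) => [b|]; first by move/eqP.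
    by rewrite !inE E.
  - case=> X; rewrite powersetE => sub ->; apply/forallP => i; rewrite ffunE.
    by case: (c i).
rewrite card_in_imset ?card_powerset //.
move=> X Y; rewrite !powersetE => sX sY /ffunP h; apply/setP => i.
move: (h i); rewrite !ffunE.
case E: (c i) => [b|] // _.
have nX : i \notin X by apply/negP => /(subsetP sX); rewrite inE E.
have nY : i \notin Y by apply/negP => /(subsetP sY); rewrite inE E.
by rewrite (negbTE nX) (negbTE nY).
Qed.

Lemma card_codes_free n (F : {set 'I_n}) :
  #|[set c : cube_code n | freec c == F]| = 2 ^ (n - #|F|).
Proof.
pose code (X : {set 'I_n}) : cube_code n :=
  [ffun i => if i \in F then None else Some (i \in X)].
have -> : [set c : cube_code n | freec c == F] = code @: powerset (~: F).
  apply/setP => c; rewrite inE; apply/idP/imsetP.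
  - move=> /eqP hc; exists [set i | c i == Some true].
      rewrite powersetE; apply/subsetP => i; rewrite !inE -hc inE.
      by case: (c i).
    apply/ffunP => i; rewrite ffunE -hc !inE.
    by case: (c i) => [[]|].
  - case=> X; rewrite powersetE => sub ->; apply/eqP/setP => i.
    by rewrite !inE ffunE; case: (i \in F).
rewrite card_in_imset ?card_powerset; last first.
  move=> X Y; rewrite !powersetE => sX sY /ffunP h; apply/setP => i.
  move: (h i); rewrite !ffunE.
  case E: (i \in F); last by case.
  have nX : i \notin X by apply/negP => /(subsetP sX); rewrite inE E.
  have nY : i \notin Y by apply/negP => /(subsetP sY); rewrite inE E.
  by rewrite (negbTE nX) (negbTE nY).
by rewrite (cardsCs (~: F)) setCK card_ord.
Qed.

Lemma card_codes_P n (P : pred {set 'I_n}) :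
  #|[set c : cube_code n | P (freec c)]| = \sum_(F | P F) 2 ^ (n - #|F|).
Proof.
rewrite -sum1dep_card (partition_big (@freec n) P) //=.
apply: eq_bigr => F PF; rewrite -card_codes_free -sum1dep_card.
apply: eq_bigl => c.
by case: eqP => [->|]; rewrite ?PF ?andbF.
Qed.

Lemma card_codes_dim n d :
  #|[set c : cube_code n | cube_dim c == d]| = 'C(n, d) * 2 ^ (n - d).
Proof.
rewrite (card_codes_P (fun F => #|F| == d)).
rewrite (eq_bigr (fun _ => 2 ^ (n - d))); last by move=> F /eqP ->.
rewrite sum_nat_const -cardsE.
by rewrite card_draws card_ord.
Qed.

Lemma card_codes_sub n d (P : {set 'I_n}) :
  #|[set c : cube_code n | (cube_dim c == d) && (freec c \subset P)]|
    = 'C(#|P|, d) * 2 ^ (n - d).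
Proof.
rewrite (card_codes_P (fun F => (#|F| == d) && (F \subset P))).
rewrite (eq_bigr (fun _ => 2 ^ (n - d))); last by move=> F /andP[/eqP ->].
rewrite sum_nat_const -cardsE -cards_draws.
congr (_ * _); apply: eq_card => F; rewrite !inE andbC. by rewrite unfold_in.
Qed.

Definition ins n (i : 'I_n.+1) (b : bool) (y : point n) : point n.+1 :=
  [ffun j => if unlift i j is Some k then y k else b].
Definition del n (i : 'I_n.+1) (x : point n.+1) : point n :=
  [ffun k => x (lift i k)].
Definition insc n (i : 'I_n.+1) (b : bool) (c : cube_code n) : cube_code n.+1 :=
  [ffun j => if unlift i j is Some k then c k else Some b].
Definition delc n (i : 'I_n.+1) (c : cube_code n.+1) : cube_code n :=
  [ffun k => c (lift i k)].

Lemma restr n (i : 'I_n.+1) b (S : {set point n.+1}) (c : cube_code n.+1) :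
  c i = Some b ->
  [/\ c = insc i b (delc i c), cube_dim (delc i c) = cube_dim c &
      #|[set y in [set y | ins i b y \in S] | in_cube (delc i c) y]|
        = #|[set x in S | in_cube c x]| ].
Proof.
move=> hc; split.
- apply/ffunP => j; rewrite !ffunE; case: unliftP => [k ->|->]; by rewrite ?ffunE.
- rewrite !cube_dimE.
  have -> : freec c = lift i @: freec (delc i c).
    apply/setP => j; case: (unliftP i j) => [k ->|->].
      by rewrite mem_imset; [rewrite !inE ffunE | exact: lift_inj].
    rewrite !inE hc /=; apply/esym/negbTE/imsetP => [[k _ /eqP]].
    by rewrite (negbTE (neq_lift i k)).
  by rewrite card_imset //; exact: lift_inj.
- have insI : injective (ins i b).
    move=> y y' h; apply/ffunP => k.
    by have := congr1 (fun f : point n.+1 => f (lift i k)) h; rewrite !ffunE liftK.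
  have -> : [set x in S | in_cube c x] =
      ins i b @: [set y in [set y | ins i b y \in S] | in_cube (delc i c) y].
    apply/setP => x; rewrite !inE; apply/andP/imsetP.
    + case=> xS /forallP hx.
      have hxe : ins i b (del i x) = x.
        apply/ffunP => j; rewrite !ffunE; case: unliftP => [k ->|->].
          by rewrite ffunE.
        by have := hx i; rewrite hc => /eqP.
      exists (del i x) => //.
      rewrite !inE hxe xS /=; apply/forallP => k; rewrite !ffunE.
      exact: hx (lift i k).
    + case=> y; rewrite !inE => /andP[yS /forallP hy] ->; split => //.
      apply/forallP => j; rewrite ffunE; case: unliftP => [k ->|->].
        by have := hy k; rewrite ffunE.
      by rewrite hc.
  by rewrite card_imset.
Qed.

Lemma LambdaS_step n d s (S : {set point n.+1}) :
  (n.+1 - d) * LambdaS S d s <= 2 * n.+1 * Lambda n d s.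
Proof.
set G := [set c : cube_code n.+1 |
  (cube_dim c == d) && (#|[set x in S | in_cube c x]| == s)].
have -> : LambdaS S d s = #|G| by [].
have e1 : (n.+1 - d) * #|G| = \sum_(c in G) #|[set i | c i != None]|.
  rewrite mulnC -sum_nat_const; apply: eq_bigr => c; rewrite inE => /andP[/eqP hd _].
  have h := cardsC (freec c); rewrite card_ord in h.
  have h2 : #|freec c| = d := hd.
  have -> : [set i | c i != None] = ~: freec c by apply/setP => i; rewrite !inE.
  move: h; rewrite h2; move: #|~: _| => X; lia.
have e2 : \sum_(c in G) #|[set i | c i != None]|
          = \sum_(i : 'I_n.+1) #|[set c in G | c i != None]|.
  transitivity (\sum_(c in G) \sum_(i | c i != None) 1).
    by apply: eq_bigr => c _; rewrite sum1dep_card.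
  rewrite (exchange_big_dep xpredT) //=.
  by apply: eq_bigr => i _; rewrite sum1dep_card.
have e3 : forall i, #|[set c in G | c i != None]| <= 2 * Lambda n d s.
  move=> i.
  pose Gb b := [set c' : cube_code n | (cube_dim c' == d) &&
     (#|[set y in [set y | ins i b y \in S] | in_cube c' y]| == s)].
  have Hb : forall b, #|Gb b| <= Lambda n d s.
    move=> b; have := @leq_bigmax _ (fun S0 : {set point n} => LambdaS S0 d s) [set y | ins i b y \in S].
    by rewrite /Lambda /LambdaS.

  have sub : [set c in G | c i != None] \subset
             insc i false @: Gb false :|: insc i true @: Gb true.
    apply/subsetP => c; rewrite !inE => /andP[/andP[hd hs]].
    case E: (c i) => [b|] // _.
    have [ce de ne] := restr S E.
    apply/orP; case: b E ce de ne => E ce de ne; [right|left];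
      apply/imsetP; exists (delc i c) => //; by rewrite inE de hd ne hs.
  apply: (leq_trans (subset_leq_card sub)).
  rewrite cardsU (leq_trans (leq_subr _ _)) // mul2n -addnn.
  by apply: leq_add; apply: (leq_trans (leq_imset_card _ _)).
rewrite e1 e2.
apply: (@leq_trans (\sum_(i < n.+1) (2 * Lambda n d s))).
  by apply: leq_sum => i _; exact: e3.
by rewrite sum_nat_const card_ord mulnCA mulnA.
Qed.

Lemma Lambda_step n d s :
  (n.+1 - d) * Lambda n.+1 d s <= 2 * n.+1 * Lambda n d s.
Proof. by rewrite /Lambda (bigop.bigmax_eq_arg (finset.set0 : {set point n.+1})) //; apply: LambdaS_step. Qed.

Definition par n (A : {set 'I_n}) (x : point n) : bool := \big[addb/false]_(i in A) x i.
Definition flip n (j : 'I_n) (x : point n) : point n :=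
  [ffun i => if i == j then ~~ x i else x i].

Lemma par_flip n (A : {set 'I_n}) j x : par A (flip j x) = par A x (+) (j \in A).
Proof.
rewrite /par; case: (boolP (j \in A)) => jA.
  rewrite (bigD1 j) //= [in RHS](bigD1 j) //= ffunE eqxx.
  rewrite (eq_bigr (fun i => x i)); last by move=> i /andP[_ /negbTE]; rewrite ffunE => ->.
  by case: (x j); case: (\big[addb/false]_(i in A | i != j) x i).
rewrite addbF; apply: eq_bigr => i iA; rewrite ffunE.
by case: eqP => // eij; move: jA; rewrite -eij iA.
Qed.

Lemma flipK n (j : 'I_n) : involutive (flip j).
Proof.
move=> x; apply/ffunP => i; rewrite !ffunE.
by case: eqP => _ //; rewrite negbK.
Qed.

Lemma in_cube_flip n (c : cube_code n) j x :
  c j = None -> in_cube c (flip j x) = in_cube c x.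
Proof.
move=> hj; apply: eq_forallb => i; rewrite ffunE.
by case: eqP => [->|//]; rewrite hj.
Qed.

Lemma split2 (T : finType) (A : {set T}) (r : T -> bool) :
  #|A| = #|[set x in A | r x]| + #|[set x in A | ~~ r x]|.
Proof.
rewrite -(cardID [set x | r x] A); congr (_ + _); apply: eq_card => x;
  by rewrite !inE // andbC.
Qed.

Lemma quarter (T : finType) (U : {set T}) (p q : T -> bool) (f g : T -> T)
  (u1 u2 v1 v2 : bool) :
  involutive f -> involutive g ->
  (forall x, (f x \in U) = (x \in U)) -> (forall x, (g x \in U) = (x \in U)) ->
  (forall x, p (f x) = p x (+) u1) -> (forall x, q (f x) = q x (+) u2) ->
  (forall x, p (g x) = p x (+) v1) -> (forall x, q (g x) = q x (+) v2) ->
  u1 || u2 -> v1 || v2 -> (u1 != v1) || (u2 != v2) ->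
  4 * #|[set x in U | ~~ p x && ~~ q x]| = #|U|.
Proof.
move=> fK gK fU gU pf qf pg qg hu hv huv.
pose K a b := [set x in U | (p x == a) && (q x == b)].
have shift : forall (h : T -> T) w1 w2, involutive h ->
    (forall x, (h x \in U) = (x \in U)) -> (forall x, p (h x) = p x (+) w1) ->
    (forall x, q (h x) = q x (+) w2) ->
    forall a b, #|K a b| = #|K (a (+) w1) (b (+) w2)|.
  move=> h w1 w2 hK hU ph qh a b.
  have -> : K a b = h @^-1: K (a (+) w1) (b (+) w2).
    apply/setP => x; rewrite !inE hU ph qh.
    have addbeq : forall u v w : bool, (u (+) w == v (+) w) = (u == v).
      by move=> [] [] [].
    by rewrite !addbeq.
  by rewrite card_preimset //; exact: inv_inj.
have s1 := shift f u1 u2 fK fU pf qf.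
have s2 := shift g v1 v2 gK gU pg qg.
have e0 : #|[set x in U | ~~ p x && ~~ q x]| = #|K false false|.
  by apply: eq_card => x; rewrite !inE; case: (x \in U) (p x) (q x) => [] [] [].
have sp : #|U| = #|K false false| + #|K false true| + #|K true false| + #|K true true|.
  rewrite (split2 U p) (split2 [set x in U | p x] q) (split2 [set x in U | ~~ p x] q).
  have e11 : #|[set x in [set x in U | p x] | q x]| = #|K true true|.
    by apply: eq_card => x; rewrite !inE; case: (x \in U) (p x) (q x) => [] [] [].
  have e10 : #|[set x in [set x in U | p x] | ~~ q x]| = #|K true false|.
    by apply: eq_card => x; rewrite !inE; case: (x \in U) (p x) (q x) => [] [] [].
  have e01 : #|[set x in [set x in U | ~~ p x] | q x]| = #|K false true|.
    by apply: eq_card => x; rewrite !inE; case: (x \in U) (p x) (q x) => [] [] [].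
  have e00 : #|[set x in [set x in U | ~~ p x] | ~~ q x]| = #|K false false|.
    by apply: eq_card => x; rewrite !inE; case: (x \in U) (p x) (q x) => [] [] [].
  rewrite e11 e10 e01 e00; lia.
rewrite e0 sp.
move: (s1 false false) (s1 false true) (s1 true false) (s1 true true)
      (s2 false false) (s2 false true) (s2 true false) (s2 true true) hu hv huv.
clear s1 s2 shift e0 sp pf qf pg qg.
case: u1 u2 v1 v2 => [] [] [] [] //=;
  move: (#|K false false|) (#|K false true|) (#|K true false|) (#|K true true|);
  move=> ? ? ? ?; lia.
Qed.

Section Construction.
Variables (m : nat).
Local Notation n := (3 * m).

Definition Aset : {set 'I_n} := [set j : 'I_n | j %/ m != 1].
Definition Bset : {set 'I_n} := [set j : 'I_n | j %/ m != 0].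
Definition Sq : {set point n} := [set x | ~~ par Aset x && ~~ par Bset x].
Definition Pk (k : nat) : {set 'I_n} := [set j : 'I_n | j %/ m == k].

Hypothesis hm : 0 < m.

Lemma part_lt3 (j : 'I_n) : j %/ m < 3.
Proof. by rewrite ltn_divLR // mulnC ltn_ord. Qed.

Lemma card_Pk k : #|Pk k| <= m.
Proof.
pose f (j : 'I_n) : 'I_m := Ordinal (ltn_pmod j hm).
rewrite -(card_in_imset (f := f)); first by rewrite -[X in _ <= X]card_ord max_card.
move=> j j'; rewrite !inE => /eqP hj /eqP hj' /(congr1 val) /= hjm.
by apply: val_inj; rewrite /= (divn_eq j m) (divn_eq j' m) hj hj' hjm.
Qed.

Lemma good_cube (c : cube_code n) d : 2 <= d -> cube_dim c = d ->
  (forall k, k < 3 -> ~~ (freec c \subset Pk k)) ->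
  #|[set x in Sq | in_cube c x]| = 2 ^ (d - 2).
Proof.
move=> hd hc hP.
have /set0Pn [j1 j1F] : freec c != finset.set0.
  by rewrite -card_gt0 -cube_dimE hc; lia.
have /subsetPn [j2 j2F j2n] := hP _ (part_lt3 j1).
have cN : forall j, j \in freec c -> c j = None by move=> j; rewrite inE => /eqP.
have hq := @quarter _ [set x | in_cube c x] (par Aset) (par Bset) (flip j1) (flip j2)
  (j1 \in Aset) (j1 \in Bset) (j2 \in Aset) (j2 \in Bset) (flipK j1) (flipK j2).
rewrite card_cube_pts hc in hq.
have -> : [set x in Sq | in_cube c x] =
          [set x in [set x | in_cube c x] | ~~ par Aset x && ~~ par Bset x].
  by apply/setP => x; rewrite !inE andbC.
have e4 : 2 ^ d = 4 * 2 ^ (d - 2) by rewrite -{1}(subnKC hd) expnD.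
suff : 4 * #|[set x in [set x | in_cube c x] | ~~ par Aset x && ~~ par Bset x]| = 2 ^ d.
  rewrite e4; move: #|_| => X; lia.
apply: hq.
- by move=> x; rewrite !inE in_cube_flip // cN.
- by move=> x; rewrite !inE in_cube_flip // cN.
- by move=> x; rewrite par_flip.
- by move=> x; rewrite par_flip.
- by move=> x; rewrite par_flip.
- by move=> x; rewrite par_flip.
- by rewrite !inE; case: (j1 %/ m) => [|[|k]].
- by rewrite !inE; case: (j2 %/ m) => [|[|k]].
- move: (part_lt3 j1) (part_lt3 j2) j2n; rewrite !inE.
  by case: (j1 %/ m) => [|[|[|k1]]]; case: (j2 %/ m) => [|[|[|k2]]].
Qed.

End Construction.

Lemma ffact3 m d : 3 ^ d * m ^_ d <= (3 * m) ^_ d.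
Proof.
elim: d => [|d IH]; first by rewrite !ffactn0.
rewrite !ffactnSr expnS.
have h : 3 * (m - d) <= 3 * m - d by lia.
have -> : 3 * 3 ^ d * (m ^_ d * (m - d)) = (3 ^ d * m ^_ d) * (3 * (m - d)).
  by rewrite mulnCA !mulnA; congr (_ * _); rewrite mulnAC [m ^_ d * _]mulnC.
exact: leq_mul IH h.
Qed.

Lemma bin3 m d : 3 ^ d * 'C(m, d) <= 'C(3 * m, d).
Proof.
rewrite -(leq_pmul2r (fact_gt0 d)) -mulnA !bin_ffact; exact: ffact3.
Qed.

Lemma Lambda_lower m d : 0 < m -> 2 <= d ->
  (3 ^ (d - 1) - 1) * ('C(3 * m, d) * 2 ^ (3 * m - d))
    <= 3 ^ (d - 1) * Lambda (3 * m) d (2 ^ (d - 2)).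
Proof.
move=> hm hd.
have L1 : LambdaS (Sq m) d (2 ^ (d - 2)) <= Lambda (3 * m) d (2 ^ (d - 2)).
  by have := @leq_bigmax _ (fun S0 : {set point (3 * m)} => LambdaS S0 d (2 ^ (d - 2))) (Sq m).
set T := [set c : cube_code (3 * m) | cube_dim c == d].
set Gd := [set c : cube_code (3 * m) | (cube_dim c == d) &&
            (#|[set x in Sq m | in_cube c x]| == 2 ^ (d - 2))].
have LG : LambdaS (Sq m) d (2 ^ (d - 2)) = #|Gd| by [].
pose Bd k := [set c : cube_code (3 * m) | (cube_dim c == d) && (freec c \subset Pk m k)].
have sub : T \subset Gd :|: (Bd 0 :|: Bd 1 :|: Bd 2).
  apply/subsetP => c; rewrite !inE => hc.
  case: (boolP (freec c \subset Pk m 0)) => h0; first by rewrite hc ?orbT.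
  case: (boolP (freec c \subset Pk m 1)) => h1; first by rewrite hc ?orbT.
  case: (boolP (freec c \subset Pk m 2)) => h2; first by rewrite hc ?orbT.
  rewrite hc /= ?orbF (good_cube hm hd) //; first exact/eqP.
  by move=> [|[|[|k]]].
have cB : forall k, #|Bd k| <= 'C(m, d) * 2 ^ (3 * m - d).
  move=> k; rewrite card_codes_sub leq_mul2r leq_bin2l ?orbT //.
  exact: card_Pk.
have cT : #|T| = 'C(3 * m, d) * 2 ^ (3 * m - d) by rewrite card_codes_dim.
have h1 : #|T| <= #|Gd| + 3 * ('C(m, d) * 2 ^ (3 * m - d)).
  apply: (leq_trans (subset_leq_card sub)).
  rewrite cardsU (leq_trans (leq_subr _ _)) // leq_add2l.
  rewrite cardsU (leq_trans (leq_subr _ _)) //.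
  rewrite cardsU.
  have := cB 0; have := cB 1; have := cB 2.
  move: (#|Bd 0 :&: Bd 1|) (#|Bd 0|) (#|Bd 1|) (#|Bd 2|) => ? ? ? ?; lia.
have h2 := bin3 m d.
have e3 : 3 ^ d = 3 * 3 ^ (d - 1) by rewrite -expnS; congr (_ ^ _); lia.
rewrite e3 in h2; rewrite cT in h1.
move: L1 h1 h2; rewrite LG.
move: (3 ^ (d - 1)) ('C(3 * m, d)) ('C(m, d)) (2 ^ (3 * m - d)) #|Gd|
  (Lambda (3 * m) d (2 ^ (d - 2))) => t N a X L Lam hL h1 h2.
have h3 : t * (N * X) <= t * L + (3 * t * a) * X.
  by have := leq_mul (leqnn t) h1; rewrite mulnDr; nia.
have h4 : (3 * t * a) * X <= N * X by rewrite leq_mul2r h2 orbT.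
nia.
Qed.

From mathcomp Require Import ring.
Local Open Scope ring_scope.

Lemma ratio_step (R : realType) d s n : (d <= n)%N ->
  cube_ratio R d s n.+1 <= cube_ratio R d s n.
Proof.
move=> hn; rewrite /cube_ratio.
have hD : (0 < 'C(n, d) * 2 ^ (n - d))%N by rewrite muln_gt0 bin_gt0 hn expn_gt0.
have hD' : (0 < 'C(n.+1, d) * 2 ^ (n.+1 - d))%N.
  by rewrite muln_gt0 bin_gt0 (leqW hn) expn_gt0.
rewrite ler_pdivrMr ?ltr0n // mulrAC ler_pdivlMr ?ltr0n // -!natrM ler_nat.
have step := Lambda_step n d s.
have eb : (n.+1 * 'C(n, d) = (n.+1 - d) * 'C(n.+1, d))%N := mul_bin_down n.+1 d.
have e2 : (2 ^ (n.+1 - d) = 2 * 2 ^ (n - d))%N by rewrite subSn // expnS.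
have kpos : (0 < n.+1 - d)%N by rewrite subn_gt0.
rewrite e2 -(leq_pmul2l kpos).
move: step eb kpos; move: (n.+1 - d)%N ('C(n, d)) ('C(n.+1, d)) (2 ^ (n - d))%N
  (Lambda n.+1 d s) (Lambda n d s) => k C C' X a b step eb kpos.
have h1 := leq_mul step (leqnn (C * X)).
apply: (leq_trans (_ : _ <= (2 * n.+1 * b) * (C * X))%N).
  by move: h1; rewrite !mulnA.
have -> : (2 * n.+1 * b * (C * X) = 2 * b * X * (n.+1 * C))%N.
  ring.
rewrite eb.
have -> : (2 * b * X * (k * C') = k * (b * (C' * (2 * X))))%N by ring.
exact: leqnn.
Qed.

Lemma ratio_ge0 (R : realType) d s n : 0 <= cube_ratio R d s n.
Proof. by rewrite /cube_ratio divr_ge0. Qed.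

Lemma ratio_mono (R : realType) d s n p : (d <= n)%N -> (n <= p)%N ->
  cube_ratio R d s p <= cube_ratio R d s n.
Proof.
move=> hn /subnK <-; elim: (p - n)%N => [|k IH]; first by rewrite add0n.
apply: le_trans IH; rewrite addSn; apply: ratio_step; lia.
Qed.

Lemma ratio_lower (R : realType) d m : (2 <= d)%N -> (0 < m)%N -> (d <= 3 * m)%N ->
  1 - 1 / 3%:R ^+ (d - 1) <= cube_ratio R d (2 ^ (d - 2)) (3 * m).
Proof.
move=> hd hm h3.
have hL := Lambda_lower hm hd.
rewrite /cube_ratio.
have hT : (0 < 'C(3 * m, d) * 2 ^ (3 * m - d))%N by rewrite muln_gt0 bin_gt0 h3 expn_gt0.
have ht : (0 < 3 ^ (d - 1))%N by rewrite expn_gt0.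
have -> : 1 - 1 / 3%:R ^+ (d - 1) = (3 ^ (d - 1) - 1)%N%:R / (3 ^ (d - 1))%N%:R :> R.
  rewrite natrB // natrX mulrBl divff // expf_neq0 // pnatr_eq0.
rewrite ler_pdivrMr ?ltr0n // mulrAC ler_pdivlMr ?ltr0n // -!natrM ler_nat.
by rewrite [X in (_ <= X)%N]mulnC.
Qed.


Theorem mainTheorem4 (R : realType) (d : nat) (hd : (2 <= d)%N) :
  cvgn (cube_ratio R d (2 ^ (d - 2))) /\
  1 - 1 / 3%:R ^+ (d - 1) <= cube_lambda R d (2 ^ (d - 2)).
Proof.
set s := (2 ^ (d - 2))%N.
set u := cube_ratio R d s.
pose v := fun n => u (n + d)%N.
have vdec : nonincreasing_seq v.
  apply/nonincreasing_seqP => n; rewrite /v /u addSn; apply: ratio_step; lia.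
have cv : cvgn v.
  apply: nonincreasing_is_cvgn => //; exists 0 => _ [n _ <-]; exact: ratio_ge0.
have cu : (u @ \oo --> limn v)%classic.
  rewrite -(cvg_shiftn d); exact: cv.
have cu' : cvgn u by apply/cvg_ex; exists (limn v).
split => //.
rewrite /cube_lambda -/s -/u.
apply: limr_ge => //.
exists d => // n /= hn.
have hn0 : (0 < n)%N by lia.
have hn3 : (d <= 3 * n)%N by lia.
apply: le_trans (ratio_lower R hd hn0 hn3) _.
apply: ratio_mono; lia.
Qed.
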